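(* Let $\theta\in\mathbb{R}$ with $\omega_0=\cos\theta\neq0$, $\gamma=\sin\theta$, and let $c,\kappa\in\mathbb{R}$. Let $\mathcal H_1$ be the operator on $\mathcal F^2(\mathbb C^3)$ (defined on polynomials) given by $$\mathcal H_1=\omega_0^{-2}\Big(\sum_{i,j=1}^3B_{ij}\,\zeta_i\partial_{\zeta_j}+\sum_{i,j,k,l=1}^3V_{ijkl}\,\zeta_i\partial_{\zeta_j}\zeta_k\partial_{\zeta_l}\Big)+\kappa,$$ with coefficients as in the context, and let $\mathcal H_1^\star$ be its adjoint with respect to the Fock inner product. Then $\mathcal H_1$ is $\mathcal C_3$-self-adjoint: $\mathcal C_3\mathcal H_1^\star\mathcal C_3=\mathcal H_1$.
   Context: $\mathcal F^2(\mathbb C^3)$ is the Hilbert space of entire functions $\psi(\zeta_1,\zeta_2,\zeta_3)$ with inner product $\langle\psi,\phi\rangle=\int_{\mathbb C^3}\psi\,\overline{\phi}\,dW(\zeta_1)dW(\zeta_2)dW(\zeta_3)$, $dW(u)=\pi^{-1}e^{-|u|^2}\,d(\mathrm{Re}\,u)\,d(\mathrm{Im}\,u)$ finite. The adjoint is characterized by $\langle\mathcal H_1\psi,K\rangle=\langle\psi,\mathcal H_1^\star K\rangle$ for the reproducing kernels $K^{[m_1,m_2,m_3]}_{\zeta_1,\zeta_2,\zeta_3}(u)=\prod_{j=1}^3u_j^{m_j}e^{u_j\overline{\zeta_j}}$. $\mathcal C_3$ is the anti-linear conjugation $(\mathcal C_3\psi)(\zeta_1,\zeta_2,\zeta_3)=\overline{\psi(\overline{-\zeta_1},\overline{-\zeta_2},\overline{-\zeta_3})}$.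 Nonzero coefficients: $B_{11}=c\omega_0$, $B_{22}=-c\omega_0$, $B_{33}=-2\omega_0^2c$, $B_{12}=B_{21}=ic\gamma\omega_0$; $V_{1111}=V_{2222}=\tfrac14$, $V_{1122}=-\tfrac12$, $V_{1212}=V_{2121}=-\tfrac{\gamma^2}{4}$, $V_{1221}=-\tfrac{\gamma^2}{2}$, $V_{3333}=\omega_0^2$, $V_{1112}=V_{1121}=V_{1211}=V_{2111}=\tfrac{i\gamma}{4}$, $V_{2212}=V_{2221}=V_{1222}=V_{2122}=-\tfrac{i\gamma}{4}$, $V_{1133}=-\omega_0$, $V_{2233}=\omega_0$, $V_{1233}=V_{2133}=-i\gamma\omega_0$; all others zero. *)

(* Defs.v *)
From HB Require Import structures.
From Stdlib Require Import Reals.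
From mathcomp Require Import all_boot all_order all_algebra.
From mathcomp Require Import Rstruct.
From mathcomp Require Import complex.
From mathcomp Require Import mpoly.

Set Implicit Arguments.
Unset Strict Implicit.
Unset Printing Implicit Defensive.

Import GRing.Theory Num.Theory.
Local Open Scope ring_scope.
Local Open Scope complex_scope.

Definition Cx : Type := complex R.
Definition rC (x : R) : Cx := x%:C.

(* Polynomials in (zeta_1, zeta_2, zeta_3), i.e. the dense domain of
   holomorphic polynomials in F^2(C^3).  Variable zeta_{i+1} is 'X_i. *)
Definition poly3 := {mpoly Cx[3]}.

Definition mfact (m : 'X_{1..3}) : nat := (\prod_(i < 3) (m i)`!)%N.

(* Fock inner product <psi, phi> = \int psi conj(phi) dW dW dW on polynomials.
   Since <zeta^a, zeta^b> = a! delta_{ab} for the Gaussian measure dW, this is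
   sum_a psi_a conj(phi_a) a!. *)
Definition fock (p q : poly3) : Cx :=
  \sum_(m <- msupp p) p@_m * conjc (q@_m) * (mfact m)%:R.

(* Anti-linear conjugation (C_3 psi)(zeta) = conj(psi(conj(-zeta))):
   on coefficients, zeta^a with coefficient c becomes (-1)^|a| conj(c) zeta^a. *)
Definition C3 (p : poly3) : poly3 :=
  \sum_(m <- msupp p) (((-1) ^+ mdeg m) * conjc (p@_m)) *: 'X_[m].

(* Coefficients B_{ij}, indices 1..3 written 0..2. *)
Definition Bco (w g c : R) (i j : 'I_3) : Cx :=
  match nat_of_ord i, nat_of_ord j with
  | 0, 0 => rC (c * w)
  | 1, 1 => rC (- (c * w))
  | 2, 2 => rC (- (2 * w ^+ 2 * c))
  | 0, 1 | 1, 0 => 'i * rC (c * g * w)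
  | _, _ => 0
  end.

(* Coefficients V_{ijkl}, indices 1..3 written 0..2. *)
Definition Vco (w g : R) (i j k l : 'I_3) : Cx :=
  match nat_of_ord i, nat_of_ord j, nat_of_ord k, nat_of_ord l with
  | 0, 0, 0, 0 | 1, 1, 1, 1 => rC (4%:R^-1)
  | 0, 0, 1, 1 => rC (- (2%:R^-1))
  | 0, 1, 0, 1 | 1, 0, 1, 0 => rC (- (g ^+ 2 / 4%:R))
  | 0, 1, 1, 0 => rC (- (g ^+ 2 / 2%:R))
  | 2, 2, 2, 2 => rC (w ^+ 2)
  | 0, 0, 0, 1 | 0, 0, 1, 0 | 0, 1, 0, 0 | 1, 0, 0, 0 => 'i * rC (g / 4%:R)
  | 1, 1, 0, 1 | 1, 1, 1, 0 | 0, 1, 1, 1 | 1, 0, 1, 1 => - ('i * rC (g / 4%:R))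
  | 0, 0, 2, 2 => rC (- w)
  | 1, 1, 2, 2 => rC w
  | 0, 1, 2, 2 | 1, 0, 2, 2 => - ('i * rC (g * w))
  | _, _, _, _ => 0
  end.

Definition H1 (w g c kappa : R) (p : poly3) : poly3 :=
  rC (w ^- 2) *:
    ((\sum_(i < 3) \sum_(j < 3) Bco w g c i j *: ('X_i * p^`M(j)))
   + (\sum_(i < 3) \sum_(j < 3) \sum_(k < 3) \sum_(l < 3)
        Vco w g i j k l *: ('X_i * ('X_k * p^`M(l))^`M(j))))
  + rC kappa *: p.

Definition is_fock_adjoint (H Hs : poly3 -> poly3) : Prop :=
  forall p q : poly3, fock (H p) q = fock p (Hs q).

(* Main.v *)
Require Import Defs.
From HB Require Import structures.
From Stdlib Require Import Reals.
From mathcomp Require Import all_boot all_order all_algebra.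
From mathcomp Require Import Rstruct complex mpoly.
From mathcomp Require Import ring.

Set Implicit Arguments.
Unset Strict Implicit.
Unset Printing Implicit Defensive.
Import GRing.Theory Num.Theory.
Local Open Scope ring_scope.
Local Open Scope complex_scope.

Definition cmap (f : 'X_{1..3} -> Cx -> Cx) (p : poly3) : poly3 :=
  \sum_(m <- msupp p) f m (p@_m) *: 'X_[m].

Lemma cmapE f p m : f m 0 = 0 -> (cmap f p)@_m = f m (p@_m).
Proof.
move=> f0; rewrite /cmap raddf_sum /=.
under eq_bigr do rewrite mcoeffZ mcoeffX.
case: (boolP (m \in msupp p)) => Hm.
  rewrite (bigD1_seq m) ?msupp_uniq //= eqxx mulr1 big1 ?addr0 //.
  by move=> k /negPf; rewrite eq_sym => ->; rewrite mulr0.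
rewrite big1_seq ?(memN_msupp_eq0 Hm) ?f0 //.
move=> k /andP[_ Hk]; case: eqP => [Ek|]; last by rewrite mulr0.
by subst k; rewrite Hk in Hm.
Qed.

Definition Pi (p : poly3) : poly3 := cmap (fun m c => (-1) ^+ mdeg m * c) p.
Definition K (p : poly3) : poly3 := cmap (fun m c => conjc c) p.

Lemma PiE p m : (Pi p)@_m = (-1) ^+ mdeg m * p@_m.
Proof. by rewrite cmapE // mulr0. Qed.
Lemma KE p m : (K p)@_m = conjc (p@_m).
Proof. by rewrite cmapE // rmorph0. Qed.
Lemma C3E p m : (C3 p)@_m = (-1) ^+ mdeg m * conjc (p@_m).
Proof. by rewrite -[C3 p]/(cmap (fun m c => (-1) ^+ mdeg m * conjc c) p) cmapE // rmorph0 mulr0. Qed.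

Lemma conj_sign n : conjc ((-1) ^+ n : Cx) = (-1) ^+ n.
Proof. by rewrite rmorphXn rmorphN rmorph1. Qed.

Lemma PiK p : Pi (Pi p) = p.
Proof. by apply/mpolyP => m; rewrite !PiE mulrA -expr2 sqrr_sign mul1r. Qed.
Lemma KK p : K (K p) = p.
Proof. by apply/mpolyP => m; rewrite !KE conjcK. Qed.
Lemma C3K_l p : C3 (K p) = Pi p.
Proof. by apply/mpolyP => m; rewrite C3E KE PiE conjcK. Qed.
Lemma KC3 p : K (C3 p) = Pi p.
Proof. by apply/mpolyP => m; rewrite KE C3E PiE rmorphM /= conj_sign conjcK. Qed.

Lemma Pi_is_linear : linear Pi.
Proof.
move=> a p q; apply/mpolyP => m.
by rewrite mcoeffD mcoeffZ !PiE mcoeffD mcoeffZ; ring.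
Qed.
HB.instance Definition _ := GRing.isLinear.Build Cx poly3 poly3 _ Pi Pi_is_linear.

Definition bil (p q : poly3) : Cx :=
  \sum_(m <- msupp p) p@_m * q@_m * (mfact m)%:R.

Lemma bil_sup p q (s : seq 'X_{1..3}) : uniq s -> {subset msupp p <= s} ->
  bil p q = \sum_(m <- s) p@_m * q@_m * (mfact m)%:R.
Proof.
move=> us sub; rewrite (bigID (fun m => m \in msupp p)) /=.
rewrite [X in _ = _ + X]big1 ?addr0; last first.
  by move=> m /memN_msupp_eq0 ->; rewrite !mul0r.
rewrite -big_filter /bil; apply: perm_big.
apply: uniq_perm; rewrite ?msupp_uniq ?filter_uniq // => m.
rewrite mem_filter; case: (boolP (m \in msupp p)) => //= H.
by rewrite (sub _ H).
Qed.

Lemma bilC p q : bil p q = bil q p.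
Proof.
set s := undup (msupp p ++ msupp q).
have us : uniq s by rewrite undup_uniq.
rewrite (@bil_sup p q s) // ?(@bil_sup q p s) //.
- by apply: eq_bigr => m _; rewrite [p@_m * _]mulrC.
- by move=> m Hm; rewrite mem_undup mem_cat Hm orbT.
- by move=> m Hm; rewrite mem_undup mem_cat Hm.
Qed.

Lemma bilDr p q1 q2 : bil p (q1 + q2) = bil p q1 + bil p q2.
Proof. by rewrite /bil -big_split; apply: eq_bigr => m _; rewrite mcoeffD mulrDr mulrDl. Qed.
Lemma bilZr p c q : bil p (c *: q) = c * bil p q.
Proof. by rewrite /bil mulr_sumr; apply: eq_bigr => m _; rewrite mcoeffZ mulrCA !mulrA. Qed.
Lemma bil0r p : bil p 0 = 0.
Proof. by rewrite /bil big1 // => m _; rewrite mcoeff0 mulr0 mul0r. Qed.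
Lemma bil_sumr p I (r : seq I) (P : pred I) (F : I -> poly3) :
  bil p (\sum_(i <- r | P i) F i) = \sum_(i <- r | P i) bil p (F i).
Proof. exact: (big_morph _ (bilDr p) (bil0r p)). Qed.
Lemma bilDl p1 p2 q : bil (p1 + p2) q = bil p1 q + bil p2 q.
Proof. by rewrite bilC bilDr !(bilC q). Qed.
Lemma bilZl c p q : bil (c *: p) q = c * bil p q.
Proof. by rewrite bilC bilZr bilC. Qed.
Lemma bil_suml q I (r : seq I) (P : pred I) (F : I -> poly3) :
  bil (\sum_(i <- r | P i) F i) q = \sum_(i <- r | P i) bil (F i) q.
Proof. by rewrite bilC bil_sumr; apply: eq_bigr => i _; rewrite bilC. Qed.

Lemma bilXm m q : bil 'X_[m] q = q@_m * (mfact m)%:R.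
Proof. by rewrite /bil msuppX big_seq1 mcoeffX eqxx mul1r. Qed.

Lemma mfactU (a : 'I_3) k : mfact (U_(a) + k)%MM = ((k a).+1 * mfact k)%N.
Proof.
rewrite /mfact (bigD1 a) // [in RHS](bigD1 a) //.
rewrite mnmDE mnm1E eqxx add1n factS /= -mulnA; congr (_ * (_ * _))%N.
by apply: eq_bigr => i /negPf Hi; rewrite mnmDE mnm1E eq_sym Hi.
Qed.

Lemma bilXl (a : 'I_3) p q : bil ('X_a * p) q = bil p (q^`M(a)).
Proof.
rewrite {1}(mpolyE p) mulr_sumr bil_suml [RHS]/bil; apply: eq_bigr => m _.
rewrite -scalerAr -mpolyXD bilZl bilXm mcoeff_mderiv mfactU addmC natrM.
by rewrite -mulr_natl; ring.
Qed.

Lemma bilDl_ (a : 'I_3) p q : bil (p^`M(a)) q = bil p ('X_a * q).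
Proof. by rewrite bilC -bilXl bilC. Qed.

Lemma PiXm m : Pi 'X_[m] = (-1) ^+ mdeg m *: 'X_[m].
Proof.
apply/mpolyP => k; rewrite PiE mcoeffZ !mcoeffX.
by case: eqP => [->|]; rewrite ?mulr0.
Qed.

Lemma PiXl (a : 'I_3) p : Pi ('X_a * p) = - ('X_a * Pi p).
Proof.
rewrite {1}(mpolyE p) mulr_sumr linear_sum [in RHS]/Pi /cmap mulr_sumr -sumrN.
apply: eq_bigr => m _.
rewrite -scalerAr -mpolyXD linearZ /= PiXm mdegD mdeg1 -scalerAr -mpolyXD.
by rewrite scalerA exprS -scaleNr; congr (_ *: _); ring.
Qed.

Lemma PiD (a : 'I_3) p : Pi (p^`M(a)) = - (Pi p)^`M(a).
Proof.
apply/mpolyP => m; rewrite mcoeffN PiE !mcoeff_mderiv PiE mdegD mdeg1 addn1 exprS.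
by rewrite mulrnAr mulN1r mulNr mulNrn opprK.
Qed.

Lemma PiXD (a b : 'I_3) q : Pi ('X_a * (Pi q)^`M(b)) = 'X_a * q^`M(b).
Proof. by rewrite PiXl PiD PiK mulrN opprK. Qed.

Lemma PiXDXD (i j k l : 'I_3) q :
  Pi ('X_i * ('X_k * (Pi q)^`M(l))^`M(j)) = 'X_i * ('X_k * q^`M(l))^`M(j).
Proof.
have -> : 'X_k * (Pi q)^`M(l) = Pi ('X_k * q^`M(l)) by rewrite -PiXD PiK.
by rewrite PiXD.
Qed.

Lemma Pi_H1 w g c kappa p : Pi (H1 w g c kappa (Pi p)) = H1 w g c kappa p.
Proof.
rewrite /H1 linearD !linearZ /= PiK linearD /= !linear_sum /=.
congr (_ *: (_ + _) + _).
  apply: eq_bigr => i _; rewrite linear_sum; apply: eq_bigr => j _.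
  by rewrite linearZ /= PiXD.
apply: eq_bigr => i _; rewrite linear_sum; apply: eq_bigr => j _.
rewrite linear_sum; apply: eq_bigr => k _.
rewrite linear_sum; apply: eq_bigr => l _.
by rewrite linearZ /= PiXDXD.
Qed.

Lemma comm_op (a b c d : 'I_3) q : b != c -> d != a ->
  'X_a * ('X_c * q^`M(d))^`M(b) = 'X_c * ('X_a * q^`M(b))^`M(d) :> poly3.
Proof.
move=> bc da; rewrite !mderivM !mderivX !mnm1E eq_sym (negPf bc) eq_sym (negPf da).
by rewrite !scale0r !mul0r !add0r mulrCA mderiv_comm.
Qed.

Lemma bil_T1 (i j : 'I_3) p q : bil ('X_i * p^`M(j)) q = bil p ('X_j * q^`M(i)).
Proof. by rewrite bilXl bilDl_. Qed.

Lemma bil_T2 (i j k l : 'I_3) p q :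
  bil ('X_i * ('X_k * p^`M(l))^`M(j)) q = bil p ('X_l * ('X_j * q^`M(i))^`M(k)).
Proof. by rewrite bilXl bilDl_ bilXl bilDl_. Qed.

Definition o0 : 'I_3 := @Ordinal 3 0 isT.
Definition o1 : 'I_3 := @Ordinal 3 1 isT.
Definition o2 : 'I_3 := @Ordinal 3 2 isT.

Lemma sum3 (F : 'I_3 -> Cx) : \sum_(i < 3) F i = F o0 + F o1 + F o2.
Proof.
rewrite !big_ord_recr big_ord0 /= add0r; congr (F _ + F _ + F _); exact: val_inj.
Qed.

Lemma Bsym w g c (f : 'I_3 -> 'I_3 -> Cx) :
  \sum_(i < 3) \sum_(j < 3) Bco w g c i j * f j i =
  \sum_(i < 3) \sum_(j < 3) Bco w g c i j * f i j.
Proof. rewrite !sum3; cbv beta iota delta [Bco nat_of_ord o0 o1 o2]. ring. Qed.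

Lemma Vsym w g (f : 'I_3 -> 'I_3 -> 'I_3 -> 'I_3 -> Cx) :
  f o1 o1 o0 o0 = f o0 o0 o1 o1 -> f o2 o2 o0 o0 = f o0 o0 o2 o2 ->
  f o2 o2 o1 o1 = f o1 o1 o2 o2 -> f o2 o2 o1 o0 = f o1 o0 o2 o2 ->
  f o2 o2 o0 o1 = f o0 o1 o2 o2 ->
  \sum_(i < 3) \sum_(j < 3) \sum_(k < 3) \sum_(l < 3) Vco w g i j k l * f l k j i =
  \sum_(i < 3) \sum_(j < 3) \sum_(k < 3) \sum_(l < 3) Vco w g i j k l * f i j k l.
Proof.
move=> h1 h2 h3 h4 h5; rewrite !sum3 h1 h2 h3 h4 h5.
cbv beta iota delta [Vco nat_of_ord o0 o1 o2].
rewrite !mul0r !addr0 !add0r.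
ring.
Qed.

Lemma bil_H w g c kappa p q :
  bil (H1 w g c kappa p) q = bil p (H1 w g c kappa q).
Proof.
rewrite /H1 bilDl bilZl bilDl bilDr bilZr bilDr bilZl bilZr.
congr (_ * (_ + _) + _).
- transitivity (\sum_(i < 3) \sum_(j < 3) Bco w g c i j * bil p ('X_j * q^`M(i))).
    rewrite bil_suml; apply: eq_bigr => i _; rewrite bil_suml; apply: eq_bigr => j _.
    by rewrite bilZl bil_T1.
  rewrite (@Bsym w g c (fun a b => bil p ('X_a * q^`M(b)))) .
  rewrite bil_sumr; apply: eq_bigr => i _; rewrite bil_sumr; apply: eq_bigr => j _.
  by rewrite bilZr.
- transitivity (\sum_(i < 3) \sum_(j < 3) \sum_(k < 3) \sum_(l < 3)
     Vco w g i j k l * bil p ('X_l * ('X_j * q^`M(i))^`M(k))).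
    rewrite bil_suml; apply: eq_bigr => i _; rewrite bil_suml; apply: eq_bigr => j _.
    rewrite bil_suml; apply: eq_bigr => k _; rewrite bil_suml; apply: eq_bigr => l _.
    by rewrite bilZl bil_T2.
  rewrite (@Vsym w g (fun a b c d => bil p ('X_a * ('X_c * q^`M(d))^`M(b)))) /=;
    try by rewrite comm_op.
  rewrite bil_sumr; apply: eq_bigr => i _; rewrite bil_sumr; apply: eq_bigr => j _.
  rewrite bil_sumr; apply: eq_bigr => k _; rewrite bil_sumr; apply: eq_bigr => l _.
  by rewrite bilZr.
Qed.

Lemma fock_bil p q : fock p q = bil p (K q).
Proof. by rewrite /fock /bil; apply: eq_bigr => m _; rewrite KE. Qed.

Lemma fock_nondeg r r' : (forall p, fock p r = fock p r') -> r = r'.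
Proof.
move=> h; apply/mpolyP => m; have := h 'X_[m].
rewrite /fock msuppX !big_seq1 mcoeffX eqxx !mul1r => /mulIf.
have nz : (mfact m)%:R != 0 :> Cx.
  by rewrite pnatr_eq0 -lt0n /mfact prodn_gt0 // => i; rewrite fact_gt0.
by move=> /(_ nz) /(congr1 conjc); rewrite !conjcK.
Qed.

Unset Implicit Arguments.

Theorem proposition2 (theta c kappa : R) :
  cos theta <> 0%R ->
  let w := cos theta in
  let g := sin theta in
  (exists Hs : poly3 -> poly3, is_fock_adjoint (H1 w g c kappa) Hs) /\
  (forall Hs : poly3 -> poly3, is_fock_adjoint (H1 w g c kappa) Hs ->
     forall p : poly3, C3 (Hs (C3 p)) = H1 w g c kappa p).
Proof.
move=> _ w g.
have adj : is_fock_adjoint (H1 w g c kappa) (fun q => K (H1 w g c kappa (K q))).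
  by move=> p q; rewrite !fock_bil KK bil_H.
split; first by exists (fun q => K (H1 w g c kappa (K q))).
move=> Hs hHs p.
have E : forall q, Hs q = K (H1 w g c kappa (K q)).
  by move=> q; apply: fock_nondeg => r; rewrite -hHs adj.
by rewrite E KC3 C3K_l Pi_H1.
Qed.
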